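(* Let $G$ be a finite connected multigraph without self-loops, with boundary vertex $\partial$ and a collection of nonnegative generic weights $w$ on $\vec E$; let $T^*=T^*(w)$ be the MSA of $(G,\partial)$. Fix a vertex $v$ with outgoing edges $\vec e_1,\ldots,\vec e_d$, let $u=(\vec e_2)_+$, and suppose $\vec e_1\in T^*$ and $v\notin\mathfrak F_{T^*}(u)$. Let $\Sigma=\Sigma(u,v)$ be the set of endpoints of the edges of $(\mathfrak F_{T^*}(u)\cup\mathfrak F_{T^*}(v))\setminus(\mathfrak F_{T^*}(u)\cap\mathfrak F_{T^*}(v))$ other than $u\wedge v$. Let $\vec E_\Sigma$ be the set of all oriented edges whose tail lies in $\Sigma$, and $M_\Sigma=\max\{w(\vec e):\vec e\in\vec E_\Sigma\}$. Let $w'$ be a generic collection of weights with $$w'(\vec e)\ \ge 2M_\Sigma\ \text{ if }\vec e\in\vec E_\Sigma\setminus(T^*\cup\{\vec e_2\})\text{ or }\vec e=\vec e_1,\qquad w'(\vec e)=w(\vec e)\ \text{ otherwise}.$$ Then $T'=(T^*\setminus\{\vec e_1\})\cup\{\vec e_2\}$ is the MSA of $(G,\partial)$ for the weights $w'$.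
   Context: $\vec E$ is the set of oriented edges (both orientations of each edge); $\vec e_-$ tail, $\vec e_+$ head. Weights $(W_x)_{x\in N}$ are generic if $\sum_{x\in S}n_xW_x\ne0$ for all finite $S$ and integers $n_x$ not all zero. A spanning arborescence of $(G,\partial)$ is a set of oriented edges without oriented cycles in which every vertex except $\partial$ has exactly one outgoing edge and $\partial$ none; the MSA is the (unique for generic weights) one of minimal total weight. For a spanning arborescence $T$, $\mathfrak F_T(x)$ (the future of $x$) is the oriented path in $T$ from $x$ to $\partial$, viewed as a set of oriented edges; $u\wedge v$ is the first vertex at which $\mathfrak F_T(u)$ and $\mathfrak F_T(v)$ merge. *)

(* Defs.v *)
From mathcomp Require Import all_boot all_order all_algebra.
Set Implicit Arguments. Unset Strict Implicit. Unset Printing Implicit Defensive.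
Import Order.TTheory GRing.Theory Num.Theory.
Local Open Scope ring_scope.

(* A multigraph is given by a finite vertex type V and a finite type E of
   ORIENTED edges (both orientations of every edge are elements of E), with
   tail map [tl] (e_-) and head map [hd] (e_+).  Orientation reversal is a
   hypothesis of the main theorem. *)
Section Arbo.
Variables (V E : finType) (tl hd : E -> V).

Definition erel (T : {set E}) : rel V :=
  fun x y => [exists e in T, (tl e == x) && (hd e == y)].

Definition has_oriented_cycle (T : {set E}) : Prop :=
  exists (e0 : E) (c : seq E),
    [/\ all (fun e => e \in T) (e0 :: c),
        path (fun e f => hd e == tl f) e0 c
      & hd (last e0 c) = tl e0].

Definition spanning_arborescence (root : V) (T : {set E}) : Prop :=
  [/\ ~ has_oriented_cycle T,
      forall x, x != root -> #|[set e in T | tl e == x]| = 1%N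
    & #|[set e in T | tl e == root]| = 0%N].

Variable R : realFieldType.

Definition weight (w : E -> R) (T : {set E}) : R := \sum_(e in T) w e.

Definition generic (w : E -> R) : Prop :=
  forall n : E -> int, (exists e, n e != 0) -> \sum_e (n e)%:~R * w e != 0.

Definition is_MSA (root : V) (w : E -> R) (T : {set E}) : Prop :=
  spanning_arborescence root T /\
  forall T', spanning_arborescence root T' -> weight w T <= weight w T'.

(* the future of x in T: oriented edges of the T-path from x to the root,
   i.e. the edges of T whose tail is reachable from x along T *)
Definition future (T : {set E}) (x : V) : {set E} :=
  [set e in T | connect (erel T) x (tl e)].

(* z is the vertex u /\ v at which the futures of u and v merge: the first
   common vertex of the two T-paths (all common vertices come after it) *)
Definition is_merge (T : {set E}) (u v z : V) : bool :=
  [&& connect (erel T) u z, connect (erel T) v z &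
      [forall y, (connect (erel T) u y && connect (erel T) v y) ==>
                 connect (erel T) z y]].

Definition Sigma (T : {set E}) (u v : V) : {set V} :=
  let D := (future T u :|: future T v) :\: (future T u :&: future T v) in
  [set x | [exists e in D, (tl e == x) || (hd e == x)] && ~~ is_merge T u v x].

(* M_Sigma = max of w over the oriented edges with tail in Sigma
   (the empty max is 0; weights are nonnegative) *)
Definition M_Sigma (w : E -> R) (S : {set V}) : R :=
  \big[Num.max/0]_(e | tl e \in S) w e.
End Arbo.

(* Main.v *)
Require Import Defs.
From mathcomp Require Import all_boot all_order all_algebra.
From mathcomp Require Import zify ring lra.
Set Implicit Arguments. Unset Strict Implicit. Unset Printing Implicit Defensive.

Lemma step_inv (T : finType) (e : rel T) a c :
  connect e a c -> c = a \/ exists2 a', e a a' & connect e a' c.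
Proof.
move/connectP=> [[|x p]] /=; first by move=> _ ->; left.
move=> /andP [eax px] ->; right; exists x => //.
by apply/connectP; exists p.
Qed.

Lemma connect_closedP (T : finType) (e : rel T) (P : pred T) x y :
  (forall a b, P a -> e a b -> P b) -> P x -> connect e x y -> P y.
Proof.
move=> cl + /connectP [p pth ->].
elim: p x pth => [|a p IH] x //= /andP [exa pa] Px.
by apply: IH pa (cl _ _ Px exa).
Qed.

Lemma conn_avoid (T : finType) (e e' : rel T) (P : pred T) x y :
  (forall a b, P a -> e a b -> e' a b) ->
  (forall z, connect e x z -> P z) -> connect e x y -> connect e' x y.
Proof.
move=> sub hP /connectP [p pth ->].
elim: p x pth hP => [|a p IH] x //= /andP [exa pa] hP.
apply: connect_trans (connect1 (sub _ _ (hP _ (connect0 _ _)) exa)) _.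
apply: IH pa _ => z az; apply: hP; exact: connect_trans (connect1 exa) az.
Qed.

Lemma conn_until (T : finType) (e e' : rel T) x y :
  (forall a b, a != y -> connect e x a -> connect e a y -> e a b -> e' a b) ->
  connect e x y -> connect e' x y.
Proof.
move=> sub /connectP [p pth ly].
elim: p x pth ly sub => [|a p IH] x /=; first by move=> _ ->.
move=> /andP [exa pa] ly sub.
have ay : connect e a y by apply/connectP; exists p.
case: (eqVneq x y) => [->|xy]; first exact: connect0.
apply: connect_trans (connect1 (sub _ _ xy (connect0 _ _) _ exa)) _.
  by apply: connect_trans (connect1 exa) ay.
apply: IH pa ly _ => a' b a'y aa' a'y2 eab; apply: sub => //.
exact: connect_trans (connect1 exa) aa'.
Qed.

Definition detrel (T : finType) (e : rel T) := forall x y1 y2, e x y1 -> e x y2 -> y1 = y2.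

Lemma conn_comp (T : finType) (e : rel T) a b c : detrel e ->
  connect e a b -> connect e a c -> connect e b c \/ connect e c b.
Proof.
move=> det /connectP [p pth ->].
elim: p a pth => [|x p IH] a /=; first by left.
move=> /andP [eax px] /step_inv [->|[a' ea' a'c]].
  right; apply: connect_trans (connect1 eax) _; apply/connectP; by exists p.
by rewrite (det _ _ _ ea' eax) in a'c; apply: IH.
Qed.

Lemma sink_conn (T : finType) (e : rel T) s y :
  (forall b, ~~ e s b) -> connect e s y -> y = s.
Proof. by move=> sk /step_inv [//|[a' + _]]; rewrite (negbTE (sk _)). Qed.

Lemma first_hit (T : finType) (e : rel T) (P : pred T) x y :
  connect e x y -> P y ->
  exists2 z, P z & connect (fun a b => e a b && ~~ P a) x z.
Proof.
move=> /connectP [p pth ->].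
elim: p x pth => [|a p IH] x /=; first by move=> _ Py; exists x.
move=> /andP [exa pa] Py; case Px: (P x); first by exists x.
have [z Pz cz] := IH _ pa Py; exists z => //.
by apply: connect_trans (connect1 _) cz; rewrite /= exa Px.
Qed.

Lemma lemD (T : finType) (e : rel T) (P : pred T) u w a : detrel e ->
  connect (fun x y => e x y && ~~ P x) u w -> connect e u a ->
  connect (fun x y => e x y && ~~ P x) u a \/ connect e w a.
Proof.
move=> det /connectP [p pth ->].
elim: p u pth => [|x p IH] u /=; first by move=> _ ?; right.
move=> /andP [/andP [eux Pu] px] /step_inv [->|[a' ea' a'a]]; first by left.
rewrite (det _ _ _ ea' eux) in a'a.
case: (IH _ px a'a) => [h|h]; last by right.
by left; apply: connect_trans (connect1 _) h; rewrite /= eux Pu.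
Qed.


Definition outdeg_ok (V E : finType) (tl : E -> V) (root : V) (T : {set E}) :=
  (forall x, x != root -> #|[set e in T | tl e == x]| = 1) /\
  #|[set e in T | tl e == root]| = 0.

Lemma erelP (V E : finType) (tl hd : E -> V) (T : {set E}) x y :
  reflect (exists2 e, e \in T & tl e = x /\ hd e = y) (erel tl hd T x y).
Proof.
apply: (iffP existsP) => [[e /andP [eT /andP [/eqP ? /eqP ?]]]|[e eT [? ?]]].
  by exists e.
by exists e; rewrite eT /=; apply/andP; split; apply/eqP.
Qed.

Lemma uniq_out (V E : finType) (tl : E -> V) root (T : {set E}) :
  outdeg_ok tl root T -> forall e f, e \in T -> f \in T -> tl e = tl f -> e = f.
Proof.
move=> [ok1 ok0] e f eT fT tef.
case: (eqVneq (tl e) root) => [er|enr].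
  move/eqP: ok0; rewrite cards_eq0 => /eqP/setP/(_ e).
  by rewrite !inE eT er eqxx.
move/eqP: (ok1 _ enr) => /cards1P [g hg].
have := hg; move/setP => hg'.
move: (hg' e) (hg' f); rewrite !inE eT fT tef eqxx /= => /esym/eqP -> /esym/eqP ->.
done.
Qed.

Lemma det_erel (V E : finType) (tl hd : E -> V) root (T : {set E}) :
  outdeg_ok tl root T -> detrel (erel tl hd T).
Proof.
move=> ok x y1 y2 /erelP [e eT [te he]] /erelP [f fT [tf hf]].
by rewrite -he -hf (uniq_out ok eT fT); rewrite ?te ?tf.
Qed.

Lemma root_sink (V E : finType) (tl hd : E -> V) root (T : {set E}) :
  outdeg_ok tl root T -> forall b, ~~ erel tl hd T root b.
Proof.
move=> [_ ok0] b; apply/erelP => [[e eT [te _]]].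
move/eqP: ok0; rewrite cards_eq0 => /eqP/setP/(_ e).
by rewrite !inE eT te eqxx.
Qed.

Lemma out_exists (V E : finType) (tl : E -> V) root (T : {set E}) x :
  outdeg_ok tl root T -> x != root -> exists2 e, e \in T & tl e = x.
Proof.
move=> [ok1 _] /ok1 /eqP /cards1P [g hg].
have : g \in [set e in T | tl e == x] by rewrite hg set11.
by rewrite inE => /andP [gT /eqP ?]; exists g.
Qed.

Lemma arb_cyc (V E : finType) (tl hd : E -> V) root (T : {set E}) a b :
  outdeg_ok tl root T -> (forall x, connect (erel tl hd T) x root) ->
  connect (erel tl hd T) a b -> connect (erel tl hd T) b a -> a = b.
Proof.
move=> ok reach ab ba; apply/eqP; apply/negPn/negP => anb.
have det : detrel (erel tl hd T) := det_erel ok.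
have cl : forall y, connect (erel tl hd T) a y -> connect (erel tl hd T) y a.
  move=> y; apply: (connect_closedP (P := fun y => connect (erel tl hd T) y a)).
  - move=> y1 y2 y1a ey.
    case: (step_inv y1a) => [E1|[a' ea' a'a]].
      subst y1; case: (step_inv ab) => [E2|[a1 ea1 a1b]].
        by rewrite E2 eqxx in anb.
      by rewrite (det _ _ _ ey ea1); apply: connect_trans a1b ba.
    by rewrite (det _ _ _ ey ea').
  - exact: connect0.
have := cl _ (reach a); case/step_inv => [E1|[r' + _]]; last by rewrite (negbTE (root_sink hd ok _)).
case: (step_inv ab) => [E2|[a1 + _]]; first by rewrite E2 eqxx in anb.
by rewrite E1 (negbTE (root_sink hd ok _)).
Qed.


Lemma hd_in (V E : finType) (tl hd : E -> V) e0 c :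
  path (fun e f => hd e == tl f) e0 c ->
  forall e, e \in e0 :: c -> e = last e0 c \/ hd e \in map tl c.
Proof.
elim: c e0 => [|f c IH] e0 /=.
  by move=> _ e; rewrite inE => /eqP ->; left.
move=> /andP [/eqP h0 pc] e; rewrite inE => /orP [/eqP ->|ec].
  by right; rewrite inE h0 eqxx.
case: (IH _ pc _ ec) => [->|h]; first by left.
by right; rewrite inE h orbT.
Qed.

Lemma noCyc_of_reach (V E : finType) (tl hd : E -> V) root (T : {set E}) :
  outdeg_ok tl root T -> (forall x, connect (erel tl hd T) x root) ->
  ~ has_oriented_cycle tl hd T.
Proof.
move=> ok reach [e0 [c [allT pth lst]]].
have det : detrel (erel tl hd T) := det_erel ok.
have inT : forall e, e \in e0 :: c -> e \in T by move=> e ec; exact: (allP allT).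
have rC : root \in map tl (e0 :: c).
  apply: (connect_closedP (P := fun y => y \in map tl (e0 :: c))) (reach (tl e0)); last first.
    by rewrite inE eqxx.
  move=> a b /mapP [e ec ->] eab.
  have eT := inT _ ec.
  have : erel tl hd T (tl e) (hd e) by apply/erelP; exists e.
  move/(det _ _ _ eab) => ->.
  case: (hd_in pth ec) => [->|h]; first by rewrite lst inE eqxx.
  by rewrite inE h orbT.
case/mapP: rC => e ec er.
have : erel tl hd T root (hd e) by apply/erelP; exists e; [exact: inT|split].
by rewrite (negbTE (root_sink hd ok _)).
Qed.

Lemma path_seq (E : Type) (r : E -> E -> bool) (g : nat -> E) :
  (forall k, r (g k) (g k.+1)) ->
  forall m a, path r (g a) [seq g k | k <- iota a.+1 m] /\
              last (g a) [seq g k | k <- iota a.+1 m] = g (a + m).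
Proof.
move=> hr; elim=> [|m IH] a /=; first by rewrite addn0.
have [p l] := IH a.+1; rewrite hr p l; split => //; by rewrite addSnnS.
Qed.

Lemma reach_of_noCyc (V E : finType) (tl hd : E -> V) root (T : {set E}) (d : E) :
  outdeg_ok tl root T -> ~ has_oriented_cycle tl hd T ->
  forall x, connect (erel tl hd T) x root.
Proof.
move=> ok nc x; apply/negPn/negP => nx.
pose f y := if [pick e in T | tl e == y] is Some e then hd e else y.
pose g k := odflt d [pick e in T | tl e == iter k f x].
have hk : forall k, connect (erel tl hd T) x (iter k f x).
  elim=> [|k IH]; first exact: connect0.
  rewrite iterS; set y := iter k f x; rewrite /f; case: pickP => [e /andP [eT /eqP te]|_] //.
  apply: connect_trans IH (connect1 _); apply/erelP; by exists e.
have nr : forall k, iter k f x != root.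
  by move=> k; apply/eqP => E1; move: (hk k); rewrite E1 (negbTE nx).
have gP : forall k, [/\ g k \in T, tl (g k) = iter k f x & hd (g k) = iter k.+1 f x].
  move=> k; rewrite /g iterS; set y := iter k f x; rewrite /f; case: pickP => [e /andP [eT /eqP te]|none] //=.
  have [e eT te] := out_exists ok (nr k).
  by move: (none e); rewrite eT te eqxx.
have := looping_order f x; rewrite /looping => /trajectP [i lti Ei].
set n := order f x in lti Ei.
apply: nc; exists (g i), [seq g k | k <- iota i.+1 (n - i.+1)].
have hr : forall k, (fun e f => hd e == tl f) (g k) (g k.+1).
  by move=> k /=; have [_ _ ->] := gP k; have [_ -> _] := gP k.+1.
have [p l] := @path_seq _ (fun e f => hd e == tl f) g hr (n - i.+1) i.
split => //.
  apply/allP => e; rewrite inE => /orP [/eqP ->|/mapP [k _ ->]]; [by case: (gP i)|by case: (gP k)].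
rewrite l; have [_ -> _] := gP i; have [_ _ ->] := gP (i + (n - i.+1)).
rewrite -Ei; congr (iter _ f x); move: lti; clear; lia.
Qed.


Lemma tl_nroot (V E : finType) (tl : E -> V) root (T : {set E}) a :
  outdeg_ok tl root T -> a \in T -> tl a != root.
Proof.
move=> [_ ok0] aT; apply/eqP => ar.
move/eqP: ok0; rewrite cards_eq0 => /eqP/setP/(_ a).
by rewrite !inE aT ar eqxx.
Qed.

Lemma swap_set (V E : finType) (tl : E -> V) root (T : {set E}) a b x :
  outdeg_ok tl root T -> a \in T -> b \notin T -> tl a = tl b -> x != tl a ->
  [set e in b |: (T :\ a) | tl e == x] = [set e in T | tl e == x].
Proof.
move=> ok aT bT tab xa; apply/setP => e; rewrite !inE.
case: (eqVneq (tl e) x) => [tex|]; last by rewrite !andbF.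
have ea : e != a by apply/eqP => E1; rewrite -E1 tex eqxx in xa.
have eb : e != b by apply/eqP => E1; rewrite tab -E1 tex eqxx in xa.
by rewrite (negbTE ea) (negbTE eb).
Qed.

Lemma swap_ok (V E : finType) (tl : E -> V) root (T : {set E}) a b :
  outdeg_ok tl root T -> a \in T -> b \notin T -> tl a = tl b ->
  outdeg_ok tl root (b |: (T :\ a)).
Proof.
move=> ok aT bT tab.
have anr := tl_nroot ok aT.
split; last by rewrite (swap_set ok) 1?eq_sym //; case: ok.
move=> x xr; case: (eqVneq x (tl a)) => [->|xa]; last by rewrite (swap_set ok) //; case: ok => h _; apply: h.
suff -> : [set e in b |: (T :\ a) | tl e == tl a] = [set b] by rewrite cards1.
apply/setP => e; rewrite !inE.
case: (eqVneq e b) => [->|eb] /=; first by rewrite tab eqxx.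
apply/negbTE; apply/negP => /andP [/andP [ea eT] /eqP te].
by rewrite (uniq_out ok eT aT te) eqxx in ea.
Qed.

Lemma swap_erel (V E : finType) (tl hd : E -> V) (T : {set E}) a b x y :
  x != tl a -> tl a = tl b -> erel tl hd (b |: (T :\ a)) x y = erel tl hd T x y.
Proof.
move=> xa tab; apply/erelP/erelP => [[e eT [te he]]|[e eT [te he]]]; exists e => //.
  move: eT; rewrite !inE => /orP [/eqP E1|/andP [_ //]].
  by rewrite -te E1 -tab eqxx in xa.
rewrite !inE eT andbT; apply/orP; right; apply/eqP => E1.
by rewrite -te E1 eqxx in xa.
Qed.

Lemma switch_reach (V E : finType) (tl hd : E -> V) root (T T2 : {set E}) v x :
  (forall a b, a != v -> erel tl hd T a b -> erel tl hd T2 a b) ->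
  connect (erel tl hd T2) v root -> connect (erel tl hd T) x root ->
  connect (erel tl hd T2) x root.
Proof.
move=> sub vr xr; case xv: (connect (erel tl hd T) x v).
  apply: connect_trans _ vr; apply: conn_until xv => a b av _ _; exact: sub.
apply: (conn_avoid (P := fun z => z != v)) xr => [a b|z xz]; first exact: sub.
by apply/eqP => E1; rewrite -E1 xz in xv.
Qed.

Import Order.TTheory GRing.Theory Num.Theory.
Local Open Scope ring_scope.

Lemma conn_restr (T : finType) (e : rel T) (P : pred T) x y :
  connect (fun a b => e a b && ~~ P a) x y -> connect e x y.
Proof.
by apply: (conn_avoid (P := predT)) => // a b _ /andP [].
Qed.

Lemma inSig (V E : finType) (tl hd : E -> V) (T : {set E}) u v y e :
  e \in T -> tl e = y ->
  ((connect (erel tl hd T) v y && ~~ connect (erel tl hd T) u y) ||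
   (connect (erel tl hd T) u y && ~~ connect (erel tl hd T) v y)) ->
  y \in Sigma tl hd T u v.
Proof.
move=> eT te hy; rewrite /Sigma inE; apply/andP; split.
  apply/existsP; exists e; rewrite te eqxx /= andbT.
  rewrite /future !inE eT te /=.
  by case/orP: hy => /andP [-> /negbTE ->]; rewrite /= ?andbF ?orbT.
rewrite /is_merge; by case/orP: hy => /andP [-> /negbTE ->]; rewrite /= ?andbF.
Qed.

Theorem mainTheorem11 (R : realFieldType) (V E : finType)
  (tl hd : E -> V) (rev : E -> E) (root : V)
  (* oriented multigraph structure *)
  (Hrevrev : forall e, rev (rev e) = e)
  (Hrevne : forall e, rev e != e)
  (Hrevtl : forall e, tl (rev e) = hd e)
  (Hrevhd : forall e, hd (rev e) = tl e)
  (* no self-loops *)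
  (Hloop : forall e, tl e != hd e)
  (* connected *)
  (Hconn : forall x, connect (erel tl hd [set: E]) x root)
  (w w' : E -> R)
  (Hwnn : forall e, 0 <= w e)
  (Hwgen : generic w)
  (Tstar : {set E})
  (HTstar : is_MSA tl hd root w Tstar)
  (v : V) (e1 e2 : E)
  (He1 : tl e1 = v) (He2 : tl e2 = v) (He12 : e1 != e2)
  (He1T : e1 \in Tstar)
  (Hvu : ~~ connect (erel tl hd Tstar) (hd e2) v)
  (Hw'gen : generic w')
  (Hw'big : forall e,
     (((tl e \in Sigma tl hd Tstar (hd e2) v) && (e \notin Tstar) && (e != e2))
       || (e == e1)) ->
     2 * M_Sigma tl w (Sigma tl hd Tstar (hd e2) v) <= w' e)
  (Hw'eq : forall e,
     ~~ (((tl e \in Sigma tl hd Tstar (hd e2) v) && (e \notin Tstar) && (e != e2))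
       || (e == e1)) ->
     w' e = w e) :
  is_MSA tl hd root w' (e2 |: (Tstar :\ e1)).
Proof.
set u := hd e2 in Hvu Hw'big Hw'eq *.
set Sg := Sigma tl hd Tstar u v in Hw'big Hw'eq *.
set M := M_Sigma tl w Sg in Hw'big.
case: HTstar => [[nc0 deg10 deg00] minT].
have ok0 : outdeg_ok tl root Tstar by split.
have reach0 := reach_of_noCyc e1 ok0 nc0.
have det0 : detrel (erel tl hd Tstar) := det_erel ok0.
have vnr : v != root by rewrite -He1; exact: tl_nroot ok0 He1T.
have e2nT : e2 \notin Tstar.
  apply/negP => e2T; move: He12; rewrite (uniq_out ok0 He1T e2T) ?eqxx //; by rewrite He1 He2.
have vSg : v \in Sg.
  apply: (inSig (e := e1)) => //; by rewrite connect0 Hvu.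
have wM : forall e, tl e \in Sg -> w e <= M.
  move=> e te; rewrite /M /M_Sigma (bigD1 e) //=; by rewrite le_max lexx.
have M0 : 0 <= M.
  rewrite /M /M_Sigma; apply: (big_ind (fun x => 0 <= x)) => //.
  by move=> x y x0 y0; rewrite le_max x0.
have w'ge : forall e, w e <= w' e.
  move=> e; case hv : (((tl e \in Sg) && (e \notin Tstar) && (e != e2)) || (e == e1)).
    have te : tl e \in Sg.
      by case/orP: hv => [/andP [/andP [-> _] _]|/eqP ->] //; rewrite He1.
    have := Hw'big _ hv; have := wM _ te; lra.
  by rewrite Hw'eq ?hv.
have te12 : tl e1 = tl e2 by rewrite He1 He2.
have okT' := swap_ok ok0 He1T e2nT te12.
have erT' : forall a b, a != v -> erel tl hd Tstar a b -> erel tl hd (e2 |: (Tstar :\ e1)) a b.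
  by move=> a b av; rewrite swap_erel // He1.
have e2T' : e2 \in e2 |: (Tstar :\ e1) by rewrite setU11.
have reachT' : forall x, connect (erel tl hd (e2 |: (Tstar :\ e1))) x root.
  move=> x; apply: (switch_reach erT') (reach0 x).
  apply: connect_trans (connect1 (_ : erel tl hd _ v u)) _.
    by apply/erelP; exists e2.
  apply: (conn_avoid (P := fun z => z != v)) (reach0 u) => [a b|z uz]; first exact: erT'.
  by apply/eqP => E1; rewrite -E1 uz in Hvu.
have arbT' : spanning_arborescence tl hd root (e2 |: (Tstar :\ e1)).
  by case: (okT') => h1 h2; split => //; exact: noCyc_of_reach okT' reachT'.
split => // T'' [nc'' deg1'' deg0''].
have ok'' : outdeg_ok tl root T'' by split.
have reach'' := reach_of_noCyc e1 ok'' nc''.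
have e2nT1 : e2 \notin Tstar :\ e1 by rewrite !inE negb_and e2nT orbT.
have wT'eq : weight w' (e2 |: (Tstar :\ e1)) = w e2 + weight w (Tstar :\ e1).
  rewrite /weight big_setU1 //=; congr (_ + _).
    by rewrite Hw'eq // eqxx !andbF /= eq_sym (negbTE He12).
  apply: eq_bigr => e; rewrite !inE => /andP [ee1 eT]; rewrite Hw'eq //.
  by rewrite eT (negbTE ee1) /= andbF.
have wTs : weight w Tstar = w e1 + weight w (Tstar :\ e1) by rewrite /weight (big_setD1 e1).
have := minT T'' (And3 nc'' deg1'' deg0'').
rewrite wT'eq; move: wTs; rewrite /weight.
case: (boolP [exists h in T'', ((tl h \in Sg) && (h \notin Tstar) && (h != e2)) || (h == e1)]).
  case/existsP => h /andP [hT hv].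
  have te : tl h \in Sg.
    by case/orP: hv => [/andP [/andP [-> _] _]|/eqP ->] //; rewrite He1.
  rewrite !(big_setD1 h hT) /= => -> Hmin.
  have S1 : \sum_(i in T'' :\ h) w i <= \sum_(i in T'' :\ h) w' i by apply: ler_sum => i _.
  have := Hw'big _ hv; have := wM _ te; have := wM e2; rewrite He2 => /(_ vSg).
  have := Hwnn e1; lra.
move=> nh wTs' Hmin.
have nhv : forall h, h \in T'' ->
    ~~ (((tl h \in Sg) && (h \notin Tstar) && (h != e2)) || (h == e1)).
  move=> h hT; apply/negP => hv; move/negP: nh; apply; apply/existsP; exists h.
  by rewrite hT.
have e1nT'' : e1 \notin T''.
  by apply/negP => /nhv; rewrite eqxx orbT.
have e2T'' : e2 \in T''.
  have [f fT tf] := out_exists ok'' vnr.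
  have := nhv _ fT; rewrite tf vSg negb_or => /andP [+ fe1].
  case: (boolP (f \in Tstar)) => [fTs|_ /=].
    by move: fe1; rewrite (uniq_out ok0 fTs He1T) ?eqxx // He1.
  by rewrite negbK => /eqP <-.
have sub'' : forall a b, a \in Sg -> a != v -> erel tl hd Tstar a b -> erel tl hd T'' a b.
  move=> a b aS av /erelP [e eT [te he]].
  have anr : a != root by rewrite -te; exact: tl_nroot ok0 eT.
  have [f fT tf] := out_exists ok'' anr.
  have := nhv _ fT; rewrite tf aS negb_or => /andP [+ _].
  case: (boolP (f \in Tstar)) => [fTs _|_ /=].
    apply/erelP; exists f => //; split => //.
    by rewrite (uniq_out ok0 fTs eT) ?te.
  by rewrite negbK => /eqP E1; move: av; rewrite -tf E1 He2 eqxx.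
set T3 := e1 |: (T'' :\ e2).
have te21 : tl e2 = tl e1 by rewrite He1 He2.
have ok3 : outdeg_ok tl root T3 := swap_ok ok'' e2T'' e1nT'' te21.
have er3 : forall a b, a != v -> erel tl hd T'' a b -> erel tl hd T3 a b.
  by move=> a b av; rewrite /T3 swap_erel // He2.
pose Q y := connect (erel tl hd Tstar) v y.
pose Z y := connect (erel tl hd Tstar) u y.
pose restr := fun a b => erel tl hd Tstar a b && ~~ Q a.
have [w2 Qw2 cu] := first_hit (P := Q) (reach0 u) (reach0 v).
have Zw2 : Z w2 := conn_restr cu.
have vw2 : v != w2 by apply/eqP => E1; move: Hvu; rewrite E1 /= -/(Z w2) Zw2.
have cu'' : connect (erel tl hd T'') u w2.
  apply: (conn_avoid (P := Z)) cu => [a b Za /andP [eab nQa]|z uz]; last exact: conn_restr uz.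
  have aS : a \in Sg.
    case/erelP: (eab) => e eT [te _]; apply: (inSig (e := e)) => //.
    by rewrite /Z in Za; rewrite Za nQa orbT.
  have av : a != v by apply/eqP => E1; move: nQa; rewrite E1 /Q connect0.
  exact: (sub'' _ _ aS av eab).
have cv'' : connect (erel tl hd T'') v w2.
  apply: connect_trans (connect1 _) cu''; apply/erelP; by exists e2.
have nw2v : ~~ connect (erel tl hd T'') w2 v.
  by apply/negP => h; move: vw2; rewrite (arb_cyc ok'' reach'' cv'' h) eqxx.
have c3 : connect (erel tl hd T3) w2 root.
  apply: (conn_avoid (P := fun z => z != v)) (reach'' w2) => [a b|z wz]; first exact: er3.
  by apply/eqP => E1; rewrite -E1 wz in nw2v.
set v1 := hd e1.
have ev1 : erel tl hd Tstar v v1 by apply/erelP; exists e1.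
have v1w2 : connect (erel tl hd Tstar) v1 w2.
  case: (step_inv Qw2) => [E1|[a' ea' a'w]]; first by rewrite E1 eqxx in vw2.
  by rewrite -(det0 _ _ _ ea' ev1).
have d3 : connect (erel tl hd T3) v1 w2.
  apply: conn_until v1w2 => a b aw2 v1a aw eab.
  have av : a != v.
    apply/eqP => E1; rewrite E1 in v1a.
    have := arb_cyc ok0 reach0 (connect1 ev1) v1a.
    by move=> E2; move: (Hloop e1); rewrite He1 -/v1 -E2 eqxx.
  have Qa : Q a by apply: connect_trans (connect1 ev1) v1a.
  have nZa : ~~ Z a.
    apply/negP => Za.
    have detr : detrel restr.
      by move=> x y1 y2 /andP [h1 _] /andP [h2 _]; exact: det0 h1 h2.
    have sk : forall s, Q s -> forall b, ~~ restr s b.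
      by move=> s Qs b'; rewrite /restr Qs andbF.
    case: (lemD det0 cu Za) => [ua|w2a].
      case: (conn_comp detr ua cu) => h.
        by move: aw2; rewrite (sink_conn (sk _ Qa) h) eqxx.
      by move: aw2; rewrite (sink_conn (sk _ Qw2) h) eqxx.
    by move: aw2; rewrite (arb_cyc ok0 reach0 aw w2a) eqxx.
  have aS : a \in Sg.
    case/erelP: (eab) => e eT [te _]; apply: (inSig (e := e)) => //.
    by rewrite /Q in Qa; rewrite /Z in nZa; rewrite Qa nZa.
  exact: (er3 _ _ av (sub'' _ _ aS av eab)).
have r3v : connect (erel tl hd T3) v root.
  apply: connect_trans (connect1 _) (connect_trans d3 c3).
  by apply/erelP; exists e1; rewrite // /T3 setU11.
have reach3 : forall x, connect (erel tl hd T3) x root.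
  by move=> x; apply: (switch_reach er3) r3v (reach'' x).
have arb3 : spanning_arborescence tl hd root T3.
  by case: (ok3) => h1 h2; split => //; exact: noCyc_of_reach ok3 reach3.
have := minT _ arb3.
have e1n : e1 \notin T'' :\ e2 by rewrite !inE negb_and e1nT'' orbT.
rewrite /weight /T3 big_setU1 //=.
have -> : \sum_(e in T'') w' e = \sum_(e in T'') w e.
  by apply: eq_bigr => e eT; rewrite Hw'eq // nhv.
rewrite (big_setD1 e2 e2T'') /= wTs'.
lra.
Qed.
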